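(* Fix an integer $k\ge2$ and let $w$ and $\widetilde w$ be as in the context. Then for all $x\in\mathbb R$, $$Mw(x)\le\frac92\,\widetilde w(x).$$
   Context: All intervals are half-open, $[a,b)$. $Mf(x)=\sup_{I\ni x}\frac1{|I|}\int_I|f|$ over intervals $I\ni x$. Fix an integer $k\ge2$, $\varepsilon=3^{-k}$, $p=\frac{1}{3\varepsilon}\Big(\frac{1+\varepsilon}{2}+\frac{4\varepsilon^2}{1+\varepsilon}\Big)$, $u=\sqrt p+\sqrt{p-1}$. For an interval $I$: $I_\pm$ its left/right halves; $I_m$ ($0\le m\le k-1$) the interval with the same right endpoint as $I$ and length $3^{-m}|I|$; $J^{(i)}$ ($i=1,2,3$) the $i$-th from the left of the three equal thirds of $J$. For $\omega\sigma=p$: $w_0(\omega,\sigma,I)=\frac{\omega}{\sqrt p}(u\chi_{I_-}+u^{-1}\chi_{I_+})$ and, for $\nu\ge1$, $w_\nu(\omega,\sigma,I)=\frac{\omega}{p}\big(\sum_{m=0}^{k-2}\chi_{I_m^{(1)}}+\chi_{I_{k-1}^{(1)}\cup I_{k-1}^{(2)}}+\frac{4\varepsilon}{1+\varepsilon}\chi_{I_{k-1}^{(3)}}\big)+\sum_{m=0}^{k-2}w_{\nu-1}(2\omega,\frac\sigma2,I_m^{(2)})$. Let $n=3^{k-1}$ and let $w$ be the $1$-periodic extension of $w_n(1,p,[0,1))$ to $\mathbb R$. Carrying: each $[j,j+1)$, $j\in\mathbb Z$, carries $w_n$; if $I$ carries $w_\nu$ with $\nu\ge1$, then each $I_m^{(2)}$,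 $0\le m\le k-2$, carries $w_{\nu-1}$. $\operatorname{supp}w_\nu$ denotes the union of all intervals carrying $w_\nu$. Define the $1$-periodic function $\widetilde w=\sum_{l=1}^n2^l\chi_{\operatorname{supp}w_{n-(l-1)}\setminus\operatorname{supp}w_{n-l}}+2^{n+1}\chi_{\operatorname{supp}w_0}$. *)

(* Defs.v *)
From Stdlib Require Import Reals Lra ClassicalEpsilon.
Open Scope R_scope.

Definition ind (P : Prop) : R :=
  if excluded_middle_informative P then 1 else 0.

(** Half-open intervals [c,d) are represented by their endpoints (c,d). *)
Definition chi (c d : R) (x : R) : R := ind (c <= x < d).

Fixpoint sumR (N : nat) (f : nat -> R) : R :=
  match N with
  | O => 0
  | S N' => sumR N' f + f N'
  end.

Definition eps (k : nat) : R := / (3 ^ k).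
Definition pp (k : nat) : R :=
  / (3 * eps k) * ((1 + eps k) / 2 + 4 * (eps k) ^ 2 / (1 + eps k)).
Definition uu (k : nat) : R := sqrt (pp k) + sqrt (pp k - 1).

(** For I = [a,b): I_m = [b - 3^{-m}(b-a), b) (left endpoint; right is b). *)
Definition Im_left (m : nat) (a b : R) : R := b - (b - a) / 3 ^ m.
Definition third_l (i : nat) (c d : R) : R := c + (INR i - 1) * (d - c) / 3.
Definition third_r (i : nat) (c d : R) : R := c + INR i * (d - c) / 3.

Definition chi_mi (m i : nat) (a b : R) (x : R) : R :=
  chi (third_l i (Im_left m a b) b) (third_r i (Im_left m a b) b) x.

Fixpoint wnu (k : nat) (nu : nat) (om sg a b : R) (x : R) : R :=
  match nu with
  | O =>
      om / sqrt (pp k) *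
        (uu k * chi a ((a + b) / 2) x + / uu k * chi ((a + b) / 2) b x)
  | S nu' =>
      om / pp k *
        ( sumR (k - 1) (fun m => chi_mi m 1 a b x)
        + ind ( (third_l 1 (Im_left (k-1) a b) b <= x
                   < third_r 1 (Im_left (k-1) a b) b)
              \/ (third_l 2 (Im_left (k-1) a b) b <= x
                   < third_r 2 (Im_left (k-1) a b) b) )
        + 4 * eps k / (1 + eps k) * chi_mi (k-1) 3 a b x )
      + sumR (k - 1) (fun m =>
          wnu k nu' (2 * om) (sg / 2)
              (third_l 2 (Im_left m a b) b) (third_r 2 (Im_left m a b) b) x)
  end.

Definition nn (k : nat) : nat := (3 ^ (k - 1))%nat.

Definition w (k : nat) (x : R) : R :=
  wnu k (nn k) 1 (pp k) 0 1 (frac_part x).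

(** [c,d) is reached from [a,b) after d steps of the carrying rule
    (I carries w_nu, nu>=1  ==>  each I_m^{(2)}, 0<=m<=k-2, carries w_{nu-1}). *)
Fixpoint descendant (k : nat) (depth : nat) (a b c d : R) : Prop :=
  match depth with
  | O => c = a /\ d = b
  | S depth' => exists m : nat, (m <= k - 2)%nat /\
      descendant k depth' (third_l 2 (Im_left m a b) b)
                          (third_r 2 (Im_left m a b) b) c d
  end.

(** [c,d) carries w_nu: descends from some [j,j+1) (which carries w_n)
    in n - nu steps. *)
Definition carries (k nu : nat) (c d : R) : Prop :=
  (nu <= nn k)%nat /\
  exists j : Z, descendant k (nn k - nu) (IZR j) (IZR j + 1) c d.

Definition in_supp (k nu : nat) (x : R) : Prop :=
  exists c d, carries k nu c d /\ c <= x < d.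

Definition wtilde (k : nat) (x : R) : R :=
  sumR (nn k) (fun l' =>
    let l := S l' in
    2 ^ l * ind (in_supp k (nn k - (l - 1)) x /\ ~ in_supp k (nn k - l) x))
  + 2 ^ (S (nn k)) * ind (in_supp k 0 x).

(* Main.v *)
Require Import Defs.
From Stdlib Require Import Reals Lra Lia ClassicalEpsilon Classical.
From Coquelicot Require Import Coquelicot.
Import Defs.
Open Scope R_scope.

Lemma ind_1 (P : Prop) : P -> ind P = 1.
Proof. intro H; unfold ind; destruct (excluded_middle_informative P); tauto. Qed.
Lemma ind_0 (P : Prop) : ~ P -> ind P = 0.
Proof. intro H; unfold ind; destruct (excluded_middle_informative P); tauto. Qed.
Lemma ind_ge0 (P : Prop) : 0 <= ind P.
Proof. unfold ind; destruct (excluded_middle_informative P); lra. Qed.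
Lemma ind_le1 (P : Prop) : ind P <= 1.
Proof. unfold ind; destruct (excluded_middle_informative P); lra. Qed.
Lemma chi_in c d y : c <= y < d -> chi c d y = 1.
Proof. intro; apply ind_1; auto. Qed.
Lemma chi_out c d y : ~ (c <= y < d) -> chi c d y = 0.
Proof. intro; apply ind_0; auto. Qed.
Lemma chi_ge0 c d y : 0 <= chi c d y.
Proof. apply ind_ge0. Qed.
Lemma chi_le1 c d y : chi c d y <= 1.
Proof. apply ind_le1. Qed.

Lemma sumR_le N f g : (forall i, (i < N)%nat -> f i <= g i) -> sumR N f <= sumR N g.
Proof. induction N; simpl; intros H. lra. assert (f N <= g N) by (apply H; lia).
  assert (sumR N f <= sumR N g) by (apply IHN; intros; apply H; lia). lra. Qed.
Lemma sumR_ext N f g : (forall i, (i < N)%nat -> f i = g i) -> sumR N f = sumR N g.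
Proof. induction N; simpl; intros H. lra. rewrite H by lia. rewrite IHN by (intros; apply H; lia). lra. Qed.
Lemma sumR_plus N f g : sumR N (fun i => f i + g i) = sumR N f + sumR N g.
Proof. induction N; simpl. lra. rewrite IHN; lra. Qed.
Lemma sumR_minus N f g : sumR N (fun i => f i - g i) = sumR N f - sumR N g.
Proof. induction N; simpl. lra. rewrite IHN; lra. Qed.
Lemma sumR_scal N c f : sumR N (fun i => c * f i) = c * sumR N f.
Proof. induction N; simpl. lra. rewrite IHN; lra. Qed.
Lemma sumR_const N c : sumR N (fun _ => c) = INR N * c.
Proof. induction N; simpl sumR. simpl; lra. rewrite IHN, S_INR; lra. Qed.
Lemma sumR_ge0 N f : (forall i, (i < N)%nat -> 0 <= f i) -> 0 <= sumR N f.
Proof. intros H. apply Rle_trans with (sumR N (fun _ => 0)).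
  rewrite sumR_const; lra. apply sumR_le; auto. Qed.
Lemma sumR_zero N f : (forall i, (i < N)%nat -> f i = 0) -> sumR N f = 0.
Proof. intros H. rewrite (sumR_ext N f (fun _ => 0)) by auto. rewrite sumR_const; lra. Qed.
Lemma sumR_single N f m : (m < N)%nat -> (forall i, (i < N)%nat -> i <> m -> f i = 0) ->
  sumR N f = f m.
Proof. induction N; intros Hm H. lia. simpl.
  destruct (Nat.eq_dec m N) as [->|ne].
  - rewrite sumR_zero. lra. intros; apply H; lia.
  - rewrite IHN by (try lia; intros; apply H; lia). rewrite (H N) by lia. lra. Qed.
Lemma sumR_ge_term N f i : (forall j, (j < N)%nat -> 0 <= f j) -> (i < N)%nat -> f i <= sumR N f.
Proof. induction N; intros H Hi. lia. simpl.
  destruct (Nat.eq_dec i N) as [->|ne].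
  - assert (0 <= sumR N f) by (apply sumR_ge0; intros; apply H; lia). lra.
  - assert (f i <= sumR N f) by (apply IHN; [intros; apply H; lia| lia]).
    assert (0 <= f N) by (apply H; lia). lra. Qed.

Lemma exR_plus (f g : R -> R) a b : ex_RInt f a b -> ex_RInt g a b -> ex_RInt (fun y => f y + g y) a b.
Proof. intros H1 H2; exact (ex_RInt_plus f g a b H1 H2). Qed.
Lemma exR_minus (f g : R -> R) a b : ex_RInt f a b -> ex_RInt g a b -> ex_RInt (fun y => f y - g y) a b.
Proof. intros H1 H2; exact (ex_RInt_minus f g a b H1 H2). Qed.
Lemma exR_scal (f : R -> R) c a b : ex_RInt f a b -> ex_RInt (fun y => c * f y) a b.
Proof. intros H1; exact (ex_RInt_scal f a b c H1). Qed.
Lemma exR_const (c : R) a b : ex_RInt (fun _ => c) a b.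
Proof. exact (ex_RInt_const a b c). Qed.
Lemma R_plus (f g : R -> R) a b : ex_RInt f a b -> ex_RInt g a b ->
  RInt (fun y => f y + g y) a b = RInt f a b + RInt g a b.
Proof. intros H1 H2; exact (RInt_plus f g a b H1 H2). Qed.
Lemma R_minus (f g : R -> R) a b : ex_RInt f a b -> ex_RInt g a b ->
  RInt (fun y => f y - g y) a b = RInt f a b - RInt g a b.
Proof. intros H1 H2; exact (RInt_minus f g a b H1 H2). Qed.
Lemma R_scal (f : R -> R) c a b : ex_RInt f a b -> RInt (fun y => c * f y) a b = c * RInt f a b.
Proof. intros H1; exact (RInt_scal f a b c H1). Qed.
Lemma R_const (c : R) a b : RInt (fun _ => c) a b = (b - a) * c.
Proof. exact (RInt_const a b c). Qed.
Lemma R_point (f : R -> R) a : RInt f a a = 0.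
Proof. exact (RInt_point a f). Qed.
Lemma R_chasles (f : R -> R) a b c : ex_RInt f a b -> ex_RInt f b c -> RInt f a b + RInt f b c = RInt f a c.
Proof. intros H1 H2; exact (RInt_Chasles f a b c H1 H2). Qed.
Lemma exR_sum N (g : nat -> R -> R) a b : (forall m, ex_RInt (g m) a b) ->
  ex_RInt (fun y => sumR N (fun m => g m y)) a b.
Proof. intros H; induction N; simpl. apply exR_const. apply exR_plus; auto. Qed.
Lemma R_sum N (g : nat -> R -> R) a b : (forall m, ex_RInt (g m) a b) ->
  RInt (fun y => sumR N (fun m => g m y)) a b = sumR N (fun m => RInt (g m) a b).
Proof. intros H; induction N; simpl. rewrite R_const; lra.
  rewrite R_plus; auto. rewrite IHN; auto. apply exR_sum; auto. Qed.
Lemma R_le_const (f : R -> R) a b M : a <= b -> ex_RInt f a b -> (forall y, a < y < b -> f y <= M) ->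
  RInt f a b <= M * (b - a).
Proof. intros Hab H1 H2. apply Rle_trans with (RInt (fun _ => M) a b).
  apply RInt_le; auto. apply exR_const. rewrite R_const; lra. Qed.
Lemma R_ge0 (f : R -> R) a b : a <= b -> ex_RInt f a b -> (forall y, a < y < b -> 0 <= f y) -> 0 <= RInt f a b.
Proof. intros; apply RInt_ge_0; auto. Qed.
Lemma R_le (f g : R -> R) a b : a <= b -> ex_RInt f a b -> ex_RInt g a b -> (forall y, a < y < b -> f y <= g y) ->
  RInt f a b <= RInt g a b.
Proof. intros; apply RInt_le; auto. Qed.
Lemma R_ext (f g : R -> R) a b : a <= b -> (forall y, a < y < b -> f y = g y) -> RInt f a b = RInt g a b.
Proof. intros Hab H; apply RInt_ext. intros y; rewrite Rmin_left, Rmax_right by lra; auto. Qed.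
Lemma exR_ext (f g : R -> R) a b : a <= b -> (forall y, a < y < b -> f y = g y) -> ex_RInt f a b -> ex_RInt g a b.
Proof. intros Hab H; apply ex_RInt_ext. intros y; rewrite Rmin_left, Rmax_right by lra; auto. Qed.
Lemma exR_ext_all (f g : R -> R) a b : (forall y, f y = g y) -> ex_RInt f a b -> ex_RInt g a b.
Proof. intros H; apply ex_RInt_ext; auto. Qed.
Lemma R_ext_all (f g : R -> R) a b : (forall y, f y = g y) -> RInt f a b = RInt g a b.
Proof. intros H; apply RInt_ext; auto. Qed.

Definition step (c y : R) : R := ind (c <= y).
Definition clamp (a b t : R) : R := Rmax a (Rmin t b).

Lemma ex_step_le c a b : a <= b -> ex_RInt (step c) a b.
Proof. intros Hab.
  destruct (Rle_lt_dec c a).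
  - apply exR_ext with (fun _ => 1); auto. intros y Hy; unfold step; rewrite ind_1; lra. apply exR_const.
  - destruct (Rle_lt_dec b c).
    + apply exR_ext with (fun _ => 0); auto. intros y Hy; unfold step; rewrite ind_0; lra. apply exR_const.
    + apply ex_RInt_Chasles with c.
      apply exR_ext with (fun _ => 0); try lra. intros y Hy; unfold step; rewrite ind_0; lra. apply exR_const.
      apply exR_ext with (fun _ => 1); try lra. intros y Hy; unfold step; rewrite ind_1; lra. apply exR_const.
Qed.
Lemma ex_step c a b : ex_RInt (step c) a b.
Proof. destruct (Rle_lt_dec a b). apply ex_step_le; auto.
  apply ex_RInt_swap, ex_step_le; lra. Qed.
Lemma R_step c a b : a <= b -> RInt (step c) a b = b - clamp a b c.
Proof. intros Hab. unfold clamp.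
  destruct (Rle_lt_dec c a).
  - rewrite (R_ext _ (fun _ => 1)); auto. rewrite R_const.
    rewrite Rmin_left by lra. rewrite Rmax_left by lra. lra.
    intros y Hy; unfold step; rewrite ind_1; lra.
  - destruct (Rle_lt_dec b c).
    + rewrite (R_ext _ (fun _ => 0)); auto. rewrite R_const.
      rewrite Rmin_right by lra. rewrite Rmax_right by lra. lra.
      intros y Hy; unfold step; rewrite ind_0; lra.
    + rewrite <- (R_chasles _ a c b) by (apply ex_step).
      rewrite (R_ext _ (fun _ => 0) a c); try lra. rewrite (R_ext _ (fun _ => 1) c b); try lra.
      rewrite !R_const. rewrite Rmin_left by lra. rewrite Rmax_right by lra. lra.
      intros y Hy; unfold step; rewrite ind_1; lra.
      intros y Hy; unfold step; rewrite ind_0; lra.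
Qed.
Lemma chi_step c d y : c <= d -> chi c d y = step c y - step d y.
Proof. intros H. unfold step. destruct (Rle_lt_dec c y).
  - destruct (Rle_lt_dec d y).
    + rewrite chi_out by lra. rewrite !ind_1 by lra. lra.
    + rewrite chi_in by lra. rewrite ind_1, ind_0 by lra. lra.
  - rewrite chi_out by lra. rewrite !ind_0 by lra. lra. Qed.
Lemma ex_chi c d a b : ex_RInt (chi c d) a b.
Proof. destruct (Rle_lt_dec c d).
  - apply exR_ext_all with (fun y => step c y - step d y). intros; rewrite chi_step; auto.
    apply exR_minus; apply ex_step.
  - apply exR_ext_all with (fun _ => 0). intros; rewrite chi_out; lra. apply exR_const. Qed.
Lemma R_chi c d a b : c <= d -> a <= b -> RInt (chi c d) a b = clamp a b d - clamp a b c.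
Proof. intros Hcd Hab. rewrite (R_ext_all _ (fun y => step c y - step d y)).
  rewrite R_minus by apply ex_step. rewrite !R_step by auto. lra.
  intros; rewrite chi_step; auto. Qed.
Lemma R_chi_sub c d a b : a <= c -> c <= d -> d <= b -> RInt (chi c d) a b = d - c.
Proof. intros. rewrite R_chi by lra. unfold clamp.
  rewrite (Rmin_left d b), (Rmin_left c b) by lra. rewrite Rmax_right, (Rmax_right a c) by lra. lra. Qed.

Lemma pow3_pos m : 0 < 3 ^ m.
Proof. apply pow_lt; lra. Qed.
Lemma pow3_mono i j : (i <= j)%nat -> 3 ^ i <= 3 ^ j.
Proof. intros; apply Rle_pow; auto; lra. Qed.
Lemma pow3_lin n : 2 * INR n + 1 <= 3 ^ n.
Proof. induction n. simpl; lra. rewrite S_INR. simpl. pose proof (pos_INR n). lra. Qed.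

Lemma eps_pos k : 0 < eps k.
Proof. unfold eps. apply Rinv_0_lt_compat, pow3_pos. Qed.
Lemma eps_pow k : (1 <= k)%nat -> / 3 ^ (k - 1) = 3 * eps k.
Proof. intros H. unfold eps. replace k with (S (k-1)) at 2 by lia. simpl.
  pose proof (pow3_pos (k-1)). field. lra. Qed.
Lemma eps_small k : (2 <= k)%nat -> eps k <= / 9.
Proof. intros H. unfold eps. apply Rinv_le_contravar. lra.
  replace 9 with (3^2) by (simpl; lra). apply pow3_mono; auto. Qed.
Lemma pp_eq k : pp k * (3 * eps k) = (1 + eps k) / 2 + 4 * eps k ^ 2 / (1 + eps k).
Proof. unfold pp. pose proof (eps_pos k). field. lra. Qed.
Lemma pp_big k : (2 <= k)%nat -> (INR k + 1) / 2 <= pp k.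
Proof. intros H. pose proof (eps_pos k) as He.
  assert (HP : pp k = 3 ^ (k-1) * ((1 + eps k) / 2 + 4 * eps k ^ 2 / (1 + eps k))).
  { unfold pp. rewrite <- (Rinv_inv (3 ^ (k-1))). rewrite eps_pow by lia. reflexivity.  }
  rewrite HP. pose proof (pow3_lin (k-1)). rewrite minus_INR in H0 by lia. simpl in H0.
  assert (1 <= INR k - 1). { apply Rle_trans with (INR 2 - 1). simpl; lra. apply Rplus_le_compat_r, le_INR; auto. }
  assert (0 <= 4 * eps k ^ 2 / (1 + eps k)). { apply Rmult_le_pos. nra. left; apply Rinv_0_lt_compat; lra. }
  assert (1/2 <= (1 + eps k) / 2 + 4 * eps k ^ 2 / (1 + eps k)) by lra.
  pose proof (pow3_pos (k-1)). nra. Qed.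
Lemma pp_ge1 k : (2 <= k)%nat -> 1 <= pp k.
Proof. intros H. pose proof (pp_big k H). assert (2 <= INR k) by (replace 2 with (INR 2) by (simpl; lra); apply le_INR; auto). lra. Qed.
Lemma sqp_pos k : (2 <= k)%nat -> 0 < sqrt (pp k).
Proof. intros H; apply sqrt_lt_R0; pose proof (pp_ge1 k H); lra. Qed.
Lemma uu_pos k : (2 <= k)%nat -> 0 < uu k.
Proof. intros H; unfold uu. pose proof (sqp_pos k H). pose proof (sqrt_pos (pp k - 1)). lra. Qed.
Lemma uu_inv k : (2 <= k)%nat -> / uu k = sqrt (pp k) - sqrt (pp k - 1).
Proof. intros H. pose proof (uu_pos k H). pose proof (pp_ge1 k H).
  assert (uu k * (sqrt (pp k) - sqrt (pp k - 1)) = 1).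
  { unfold uu. replace ((sqrt (pp k) + sqrt (pp k - 1)) * (sqrt (pp k) - sqrt (pp k - 1)))
      with (sqrt (pp k) * sqrt (pp k) - sqrt (pp k - 1) * sqrt (pp k - 1)) by ring.
    rewrite !sqrt_sqrt by lra. lra. }
  apply Rmult_eq_reg_l with (uu k). rewrite Rinv_r by lra. lra. lra. Qed.
Lemma uu_sum k : (2 <= k)%nat -> uu k + / uu k = 2 * sqrt (pp k).
Proof. intros H. rewrite uu_inv by auto. unfold uu. lra. Qed.

Definition Qf (c d : R) (m : nat) : R := (d - c) / 3 ^ m.
Lemma Qf_S c d m : Qf c d (S m) = Qf c d m / 3.
Proof. unfold Qf. simpl. pose proof (pow3_pos m). field. lra. Qed.
Lemma Qf_0 c d : Qf c d 0 = d - c.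
Proof. unfold Qf; simpl; lra. Qed.
Lemma Qf_pos c d m : c < d -> 0 < Qf c d m.
Proof. intros; unfold Qf. apply Rdiv_lt_0_compat; [lra| apply pow3_pos]. Qed.
Lemma Qf_mono c d i j : c < d -> (i <= j)%nat -> Qf c d j <= Qf c d i.
Proof. intros. unfold Qf. unfold Rdiv. apply Rmult_le_compat_l. lra.
  apply Rinv_le_contravar. apply pow3_pos. apply pow3_mono; auto. Qed.
Lemma Qf_le c d m : c < d -> Qf c d m <= d - c.
Proof. intros. rewrite <- Qf_0. apply Qf_mono; auto; lia. Qed.

Lemma INR1 : INR 1 = 1. Proof. reflexivity. Qed.
Lemma INR2 : INR 2 = 2. Proof. simpl; lra. Qed.
Lemma INR3 : INR 3 = 3. Proof. simpl; lra. Qed.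

Lemma pos_A_l m c d : third_l 1 (Im_left m c d) d = d - Qf c d m.
Proof. unfold third_l, Im_left, Qf. rewrite INR1. lra. Qed.
Lemma pos_A_r m c d : third_r 1 (Im_left m c d) d = d - 2 * Qf c d (S m).
Proof. rewrite Qf_S. unfold third_r, Im_left, Qf. rewrite INR1. lra. Qed.
Lemma pos_C_l m c d : third_l 2 (Im_left m c d) d = d - 2 * Qf c d (S m).
Proof. rewrite Qf_S. unfold third_l, Im_left, Qf. rewrite INR2. lra. Qed.
Lemma pos_C_r m c d : third_r 2 (Im_left m c d) d = d - Qf c d (S m).
Proof. rewrite Qf_S. unfold third_r, Im_left, Qf. rewrite INR2. lra. Qed.
Lemma pos_T_l m c d : third_l 3 (Im_left m c d) d = d - Qf c d (S m).
Proof. rewrite Qf_S. unfold third_l, Im_left, Qf. rewrite INR3. lra. Qed.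
Lemma pos_T_r m c d : third_r 3 (Im_left m c d) d = d.
Proof. unfold third_r, Im_left, Qf. rewrite INR3. lra. Qed.

Lemma ind_or_disj (A B : Prop) : (A -> ~ B) -> ind (A \/ B) = ind A + ind B.
Proof. intros H. destruct (classic A).
  - rewrite ind_1 by auto. rewrite ind_1 by auto. rewrite ind_0 by auto. lra.
  - destruct (classic B).
    + rewrite ind_1 by auto. rewrite ind_0 by auto. rewrite ind_1 by auto. lra.
    + rewrite !ind_0 by tauto. lra. Qed.

Definition ownN k om c d y : R :=
  om / pp k * (sumR (k-1) (fun m => chi (d - Qf c d m) (d - 2 * Qf c d (S m)) y)
     + chi (d - Qf c d (k-1)) (d - 2 * Qf c d k) y + chi (d - 2 * Qf c d k) (d - Qf c d k) y
     + 4 * eps k / (1 + eps k) * chi (d - Qf c d k) d y).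
Definition cL c d m := d - 2 * Qf c d (S m).
Definition cR c d m := d - Qf c d (S m).

Lemma wnu_0_eq k om sg c d y : wnu k 0 om sg c d y =
  om / sqrt (pp k) * (uu k * chi c ((c + d) / 2) y + / uu k * chi ((c + d) / 2) d y).
Proof. reflexivity. Qed.

Lemma wnu_S_eq k nu om sg c d y : (2 <= k)%nat -> wnu k (S nu) om sg c d y =
  ownN k om c d y + sumR (k-1) (fun m => wnu k nu (2 * om) (sg / 2) (cL c d m) (cR c d m) y).
Proof. intros Hk. cbn [wnu]. unfold ownN. f_equal.
  - f_equal. unfold chi_mi. rewrite (ind_or_disj).
    2:{ rewrite pos_A_r, pos_C_l. lra. }
    rewrite !pos_A_l, !pos_A_r, !pos_C_l, !pos_C_r, !pos_T_l, !pos_T_r.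
    replace (S (k-1)) with k by lia.
    rewrite (sumR_ext _ _ (fun m => chi (d - Qf c d m) (d - 2*Qf c d (S m)) y))
      by (intros; rewrite pos_A_l, pos_A_r; reflexivity).
    unfold chi. ring.
  - apply sumR_ext; intros. unfold cL, cR. rewrite pos_C_l, pos_C_r. reflexivity.
Qed.

Lemma child_geom c d m : c < d ->
  c + (d - c) / 3 <= cL c d m /\ cL c d m < cR c d m /\ cR c d m <= d.
Proof. intros H. unfold cL, cR. pose proof (Qf_pos c d (S m) H).
  pose proof (Qf_mono c d 1 (S m) H ltac:(lia)). rewrite (Qf_S c d 0), Qf_0 in H1. lra. Qed.
Lemma child_len c d m : cR c d m - cL c d m = Qf c d (S m).
Proof. unfold cL, cR; lra. Qed.
Lemma child_right c d m : d - cR c d m = Qf c d (S m).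
Proof. unfold cR; lra. Qed.
Lemma band_child c d m y : c < d -> cL c d m <= y < cR c d m ->
  d - Qf c d m <= y < d - Qf c d (S m).
Proof. intros H [H1 H2]. unfold cL, cR in *. pose proof (Qf_pos c d (S m) H).
  rewrite Qf_S in *. lra. Qed.
Lemma band_unique c d i j y : c < d -> d - Qf c d i <= y < d - Qf c d (S i) ->
  d - Qf c d j <= y < d - Qf c d (S j) -> i = j.
Proof. intros H Hi Hj. destruct (Nat.lt_total i j) as [l|[e|l]]; auto.
  - pose proof (Qf_mono c d (S i) j H l). lra.
  - pose proof (Qf_mono c d (S j) i H l). lra. Qed.

Lemma chi_adj_le1 l m r y : chi l m y + chi m r y <= 1.
Proof. destruct (classic (l <= y < m)).
  - rewrite chi_in by auto. rewrite chi_out by lra. lra.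
  - rewrite (chi_out l) by auto. pose proof (chi_le1 m r y). lra. Qed.
Lemma chi_sub_out l r y c d : c <= l -> r <= d -> (y < c \/ d <= y) -> chi l r y = 0.
Proof. intros; apply chi_out; lra. Qed.

Lemma W_nonneg k (hk : (2 <= k)%nat) nu : forall om sg c d y, 0 <= om -> 0 <= wnu k nu om sg c d y.
Proof. induction nu; intros om sg c d y Hom.
  - rewrite wnu_0_eq. pose proof (sqp_pos k hk). pose proof (uu_pos k hk).
    pose proof (chi_ge0 c ((c + d) / 2) y). pose proof (chi_ge0 ((c + d) / 2) d y).
    apply Rmult_le_pos. apply Rmult_le_pos; auto. left; apply Rinv_0_lt_compat; auto.
    apply Rplus_le_le_0_compat; apply Rmult_le_pos; auto; try lra. left; apply Rinv_0_lt_compat; auto.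
  - rewrite wnu_S_eq by auto. apply Rplus_le_le_0_compat.
    + unfold ownN. pose proof (pp_ge1 k hk). pose proof (eps_pos k).
      apply Rmult_le_pos. apply Rmult_le_pos; auto. left; apply Rinv_0_lt_compat; lra.
      repeat apply Rplus_le_le_0_compat; try apply chi_ge0.
      apply sumR_ge0; intros; apply chi_ge0.
      apply Rmult_le_pos. apply Rmult_le_pos. lra. left; apply Rinv_0_lt_compat; lra. apply chi_ge0.
    + apply sumR_ge0; intros. apply IHnu. lra.
Qed.

Lemma W_zero k (hk : (2 <= k)%nat) nu : forall om sg c d y, c < d -> (y < c \/ d <= y) ->
  wnu k nu om sg c d y = 0.
Proof. induction nu; intros om sg c d y Hcd Hy.
  - rewrite wnu_0_eq. rewrite (chi_sub_out c ((c+d)/2) y c d), (chi_sub_out ((c+d)/2) d y c d) by lra. ring.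
  - rewrite wnu_S_eq by auto. unfold ownN.
    pose proof (Qf_le c d (k-1) Hcd). pose proof (Qf_le c d k Hcd).
    pose proof (Qf_pos c d k Hcd). pose proof (Qf_pos c d (S k) Hcd).
    assert (Qf c d k = Qf c d (k-1) / 3) by (replace k with (S (k-1)) at 1 by lia; apply Qf_S).
    rewrite (sumR_zero _ (fun m => chi _ _ y)).
    2:{ intros i _. apply (chi_sub_out _ _ y c d); auto. pose proof (Qf_le c d i Hcd). lra.
        pose proof (Qf_pos c d (S i) Hcd). lra. }
    rewrite (chi_sub_out (d - Qf c d (k-1)) _ y c d), (chi_sub_out (d - 2 * Qf c d k) _ y c d),
      (chi_sub_out (d - Qf c d k) d y c d); try lra.
    rewrite sumR_zero. ring. intros i _. apply IHnu. apply child_geom; auto.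
    pose proof (child_geom c d i Hcd). lra.
Qed.

Lemma W0_le k (hk : (2 <= k)%nat) om sg c d y : 0 <= om -> wnu k 0 om sg c d y <= 2 * om.
Proof. intros Hom. rewrite wnu_0_eq. pose proof (sqp_pos k hk). pose proof (uu_pos k hk).
  pose proof (uu_sum k hk).
  assert (uu k * chi c ((c + d) / 2) y + / uu k * chi ((c + d) / 2) d y <= 2 * sqrt (pp k)).
  { rewrite <- H1. pose proof (Rinv_0_lt_compat _ H0).
    pose proof (chi_le1 c ((c + d) / 2) y). pose proof (chi_le1 ((c + d) / 2) d y).
    assert (uu k * chi c ((c + d) / 2) y <= uu k * 1) by (apply Rmult_le_compat_l; lra).
    assert (/ uu k * chi ((c + d) / 2) d y <= / uu k * 1) by (apply Rmult_le_compat_l; lra).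
    lra. }
  apply Rle_trans with (om / sqrt (pp k) * (2 * sqrt (pp k))).
  apply Rmult_le_compat_l; auto. apply Rmult_le_pos; auto. left; apply Rinv_0_lt_compat; auto.
  right. field. lra. Qed.

Lemma own_le k (hk : (2 <= k)%nat) om c d y : 0 <= om -> ownN k om c d y <= 2 * om.
Proof. intros Hom. unfold ownN. pose proof (pp_big k hk). pose proof (pp_ge1 k hk).
  pose proof (eps_pos k). pose proof (eps_small k hk).
  assert (sumR (k-1) (fun m => chi (d - Qf c d m) (d - 2 * Qf c d (S m)) y) <= INR k - 1).
  { apply Rle_trans with (sumR (k-1) (fun _ => 1)). apply sumR_le; intros; apply chi_le1.
    rewrite sumR_const, minus_INR by lia. simpl; lra. }
  pose proof (chi_adj_le1 (d - Qf c d (k-1)) (d - 2 * Qf c d k) (d - Qf c d k) y).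
  assert (4 * eps k / (1 + eps k) * chi (d - Qf c d k) d y <= 1).
  { pose proof (chi_le1 (d - Qf c d k) d y). pose proof (chi_ge0 (d - Qf c d k) d y).
    assert (4 * eps k / (1 + eps k) <= 1). { apply Rmult_le_reg_r with (1 + eps k). lra.
      unfold Rdiv. rewrite Rmult_assoc, Rinv_l by lra. lra. }
    assert (0 <= 4 * eps k / (1 + eps k)). { apply Rmult_le_pos. lra. left; apply Rinv_0_lt_compat; lra. }
    assert (4 * eps k / (1 + eps k) * chi (d - Qf c d k) d y <= 4 * eps k / (1 + eps k) * 1)
      by (apply Rmult_le_compat_l; lra). lra. }
  apply Rle_trans with (om / pp k * (INR k + 1)).
  apply Rmult_le_compat_l. apply Rmult_le_pos; auto. left; apply Rinv_0_lt_compat; lra. lra.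
  apply Rle_trans with (om / pp k * (2 * pp k)). apply Rmult_le_compat_l.
  apply Rmult_le_pos; auto. left; apply Rinv_0_lt_compat; lra. lra. right; field; lra. Qed.

Definition chsum k c d y : R := sumR (k-1) (fun m => chi (cL c d m) (cR c d m) y).

Lemma ch_ge0 k c d y : 0 <= chsum k c d y.
Proof. unfold chsum; apply sumR_ge0; intros; apply chi_ge0. Qed.

Lemma ch_le1 k c d y : c < d -> chsum k c d y <= 1.
Proof. intros H. unfold chsum.
  destruct (classic (exists m, (m < k-1)%nat /\ cL c d m <= y < cR c d m)) as [[m [Hm Hy]]|Hn].
  - rewrite (sumR_single _ _ m Hm). apply chi_le1.
    intros i Hi Hne. apply chi_out. intro Hy2. apply Hne.
    apply (band_unique c d i m y H); apply band_child; auto.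
  - rewrite sumR_zero. lra. intros i Hi. apply chi_out. intro Hy; apply Hn; eauto.
Qed.

Lemma own_zero_child k (hk : (2 <= k)%nat) om c d m y : c < d -> (m < k-1)%nat ->
  cL c d m <= y < cR c d m -> ownN k om c d y = 0.
Proof. intros H Hm Hy. pose proof (band_child c d m y H Hy) as Hb. unfold ownN.
  pose proof (Qf_mono c d (S m) (k-1) H ltac:(lia)).
  assert (Qf c d (k-1) = 3 * Qf c d k). { replace k with (S (k-1)) at 2 by lia. rewrite Qf_S. lra. }
  pose proof (Qf_pos c d k H).
  rewrite sumR_zero.
  2:{ intros i Hi. apply chi_out. intro Hy2. destruct (Nat.eq_dec i m) as [->|ne].
      unfold cL in Hy; lra.
      apply ne. apply (band_unique c d i m y H); auto. pose proof (Qf_pos c d (S i) H).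
      rewrite Qf_S in *. lra. }
  rewrite !chi_out by lra. ring. Qed.

Lemma own_le_ch k (hk : (2 <= k)%nat) om c d y : c < d -> 0 <= om ->
  ownN k om c d y <= 2 * om * (1 - chsum k c d y).
Proof. intros H Hom.
  destruct (classic (exists m, (m < k-1)%nat /\ cL c d m <= y < cR c d m)) as [[m [Hm Hy]]|Hn].
  - rewrite (own_zero_child k hk om c d m y) by auto. pose proof (ch_le1 k c d y H).
    apply Rmult_le_pos; lra.
  - unfold chsum. rewrite sumR_zero. pose proof (own_le k hk om c d y Hom). lra.
    intros i Hi. apply chi_out. intro Hy; apply Hn; eauto. Qed.

Lemma ex_own k om c d a b : ex_RInt (ownN k om c d) a b.
Proof. unfold ownN. apply exR_scal. apply exR_plus; [|apply exR_scal, ex_chi].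
  apply exR_plus; [|apply ex_chi]. apply exR_plus; [|apply ex_chi].
  apply exR_sum; intros; apply ex_chi. Qed.

Lemma W_ex k (hk : (2 <= k)%nat) nu : forall om sg c d a b, ex_RInt (wnu k nu om sg c d) a b.
Proof. induction nu; intros.
  - apply exR_ext_all with (fun y => om / sqrt (pp k) * (uu k * chi c ((c + d) / 2) y + / uu k * chi ((c + d) / 2) d y)).
    intros; rewrite wnu_0_eq; auto.
    apply exR_scal, exR_plus; apply exR_scal, ex_chi.
  - apply exR_ext_all with (fun y => ownN k om c d y + sumR (k-1) (fun m => wnu k nu (2 * om) (sg / 2) (cL c d m) (cR c d m) y)).
    intros; rewrite wnu_S_eq; auto.
    apply exR_plus. apply ex_own. apply exR_sum. intros; apply IHnu.
Qed.

Ltac clamp_tac := unfold clamp, Rmax, Rmin in *; repeat destruct Rle_dec; try lra.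

Lemma clamp_bounds a b t : a <= b -> a <= clamp a b t <= b.
Proof. intros; clamp_tac. Qed.
Lemma clamp_mono a b s t : a <= b -> s <= t -> clamp a b s <= clamp a b t.
Proof. intros; clamp_tac. Qed.

Lemma R_restrict (g : R -> R) u v a b : u <= v -> a <= b -> (forall s t, ex_RInt g s t) ->
  (forall y, y < u \/ v <= y -> g y = 0) -> RInt g a b = RInt g (clamp a b u) (clamp a b v).
Proof. intros Huv Hab Hex Hz.
  pose proof (clamp_bounds a b u Hab). pose proof (clamp_bounds a b v Hab).
  pose proof (clamp_mono a b u v Hab Huv).
  rewrite <- (R_chasles g a (clamp a b u) b) by auto.
  rewrite <- (R_chasles g (clamp a b u) (clamp a b v) b) by auto.
  rewrite (R_ext g (fun _ => 0) a (clamp a b u)); try lra.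
  rewrite (R_ext g (fun _ => 0) (clamp a b v) b); try lra.
  rewrite !R_const. lra.
  intros y Hy. apply Hz. right. clamp_tac.
  intros y Hy. apply Hz. left. clamp_tac. Qed.

Lemma R_mono_int (g : R -> R) a b a' b' : a <= a' -> a' <= b' -> b' <= b -> (forall s t, ex_RInt g s t) ->
  (forall y, 0 <= g y) -> RInt g a' b' <= RInt g a b.
Proof. intros H1 H2 H3 Hex Hp.
  rewrite <- (R_chasles g a a' b) by auto. rewrite <- (R_chasles g a' b' b) by auto.
  assert (0 <= RInt g a a') by (apply R_ge0; auto).
  assert (0 <= RInt g b' b) by (apply R_ge0; auto). lra. Qed.

Lemma geo_sum c d N : sumR N (fun i => Qf c d (S i)) = (Qf c d 0 - Qf c d N) / 2.
Proof. induction N. simpl; lra. simpl sumR. rewrite IHN. rewrite (Qf_S c d N). lra. Qed.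

Lemma Qf_km1 k c d : (1 <= k)%nat -> Qf c d (k-1) = 3 * eps k * (d - c).
Proof. intros H. unfold Qf. rewrite <- eps_pow by auto. unfold Rdiv; ring. Qed.
Lemma Qf_k k c d : Qf c d k = eps k * (d - c).
Proof. unfold Qf, eps. unfold Rdiv; ring. Qed.

Lemma R_lin4 (f0 f1 f2 f3 : R -> R) al be a b : ex_RInt f0 a b -> ex_RInt f1 a b ->
  ex_RInt f2 a b -> ex_RInt f3 a b ->
  RInt (fun y => al * (f0 y + f1 y + f2 y + be * f3 y)) a b =
  al * (RInt f0 a b + RInt f1 a b + RInt f2 a b + be * RInt f3 a b).
Proof. intros H0 H1 H2 H3.
  assert (E01 : ex_RInt (fun y => f0 y + f1 y) a b) by (apply (exR_plus f0 f1); auto).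
  assert (E012 : ex_RInt (fun y => f0 y + f1 y + f2 y) a b) by (apply (exR_plus (fun y => f0 y + f1 y) f2); auto).
  assert (E3 : ex_RInt (fun y => be * f3 y) a b) by (apply (exR_scal f3); auto).
  assert (E : ex_RInt (fun y => f0 y + f1 y + f2 y + be * f3 y) a b)
    by (apply (exR_plus (fun y => f0 y + f1 y + f2 y) (fun y => be * f3 y)); auto).
  rewrite (R_scal (fun y => f0 y + f1 y + f2 y + be * f3 y)) by auto.
  rewrite (R_plus (fun y => f0 y + f1 y + f2 y) (fun y => be * f3 y)) by auto.
  rewrite (R_plus (fun y => f0 y + f1 y) f2) by auto.
  rewrite (R_plus f0 f1) by auto. rewrite (R_scal f3) by auto. reflexivity.
Qed.

Definition child k nu om sg c d m := wnu k nu (2 * om) (sg / 2) (cL c d m) (cR c d m).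

Lemma W_S_fun k (hk : (2 <= k)%nat) nu om sg c d : forall y, wnu k (S nu) om sg c d y =
  ownN k om c d y + sumR (k-1) (fun m => child k nu om sg c d m y).
Proof. intros; rewrite wnu_S_eq; auto. Qed.

Lemma R_own k (hk : (2 <= k)%nat) om c d : c < d ->
  RInt (ownN k om c d) c d = 3 * eps k * om * (d - c).
Proof. intros H. pose proof (eps_pos k). pose proof (pp_ge1 k hk).
  pose proof (Qf_km1 k c d ltac:(lia)). pose proof (Qf_k k c d).
  pose proof (Qf_pos c d k H).
  assert (Qf c d (k-1) = 3 * Qf c d k) by lra.
  pose proof (R_lin4 (fun y => sumR (k-1) (fun m => chi (d - Qf c d m) (d - 2 * Qf c d (S m)) y))
     (chi (d - Qf c d (k-1)) (d - 2 * Qf c d k)) (chi (d - 2 * Qf c d k) (d - Qf c d k))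
     (chi (d - Qf c d k) d) (om / pp k) (4 * eps k / (1 + eps k)) c d) as HL.
  cbv beta in HL. unfold ownN. rewrite HL. clear HL.
  2: (apply exR_sum; intros; apply ex_chi). 2-4: apply ex_chi.
  rewrite R_sum by (intros; apply ex_chi).
  rewrite (sumR_ext _ _ (fun i => Qf c d (S i))).
  2:{ intros i Hi. pose proof (Qf_le c d i H). pose proof (Qf_pos c d (S i) H).
      rewrite R_chi_sub; try lra. rewrite (Qf_S c d i); lra. rewrite (Qf_S c d i) in *; lra. }
  rewrite geo_sum, Qf_0.
  pose proof (Qf_le c d (k-1) H).
  rewrite (R_chi_sub (d - Qf c d (k - 1)) (d - 2 * Qf c d k)) by lra.
  rewrite (R_chi_sub (d - 2 * Qf c d k) (d - Qf c d k)) by lra.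
  rewrite (R_chi_sub (d - Qf c d k) d) by lra.
  rewrite H2, H3.
  replace (3 * eps k * om * (d - c)) with (om / pp k * ((d-c) * (pp k * (3 * eps k)))) by (field; lra).
  f_equal. rewrite pp_eq. field. lra.
Qed.

Lemma R_lin2 (f1 f2 : R -> R) al b1 b2 a b : ex_RInt f1 a b -> ex_RInt f2 a b ->
  RInt (fun y => al * (b1 * f1 y + b2 * f2 y)) a b = al * (b1 * RInt f1 a b + b2 * RInt f2 a b).
Proof. intros H1 H2.
  assert (E1 : ex_RInt (fun y => b1 * f1 y) a b) by (apply (exR_scal f1); auto).
  assert (E2 : ex_RInt (fun y => b2 * f2 y) a b) by (apply (exR_scal f2); auto).
  assert (E : ex_RInt (fun y => b1 * f1 y + b2 * f2 y) a b) by (apply (exR_plus (fun y => b1 * f1 y) (fun y => b2 * f2 y)); auto).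
  rewrite (R_scal (fun y => b1 * f1 y + b2 * f2 y)) by auto.
  rewrite (R_plus (fun y => b1 * f1 y) (fun y => b2 * f2 y)) by auto.
  rewrite (R_scal f1), (R_scal f2) by auto. reflexivity. Qed.

Lemma R_W_S k (hk : (2 <= k)%nat) nu om sg c d a b :
  RInt (wnu k (S nu) om sg c d) a b =
  RInt (ownN k om c d) a b + sumR (k-1) (fun m => RInt (child k nu om sg c d m) a b).
Proof. rewrite (R_ext_all _ (fun y => ownN k om c d y + sumR (k-1) (fun m => child k nu om sg c d m y))).
  2: apply W_S_fun; auto.
  rewrite (R_plus (ownN k om c d) (fun y => sumR (k-1) (fun m => child k nu om sg c d m y))).
  rewrite (R_sum (k-1) (fun m => child k nu om sg c d m)). reflexivity.
  intros; apply W_ex; auto. apply ex_own. apply exR_sum; intros; apply W_ex; auto. Qed.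

Lemma child_restrict k (hk : (2 <= k)%nat) nu om sg c d m a b : c < d -> a <= b ->
  RInt (child k nu om sg c d m) a b =
  RInt (child k nu om sg c d m) (clamp a b (cL c d m)) (clamp a b (cR c d m)).
Proof. intros H Hab. pose proof (child_geom c d m H).
  apply R_restrict; auto; try lra. intros; apply W_ex; auto.
  intros y Hy; apply W_zero; auto; lra. Qed.

Lemma child_nonneg k (hk : (2 <= k)%nat) nu om sg c d m y : 0 <= om -> 0 <= child k nu om sg c d m y.
Proof. intros; apply W_nonneg; auto; lra. Qed.

Lemma Tot k (hk : (2 <= k)%nat) nu : forall om sg c d, 0 <= om -> c < d ->
  RInt (wnu k nu om sg c d) c d <= om * (d - c).
Proof. induction nu; intros om sg c d Hom H.
  - rewrite (R_ext_all _ (fun y => om / sqrt (pp k) * (uu k * chi c ((c + d) / 2) y + / uu k * chi ((c + d) / 2) d y))).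
    2: intros; apply wnu_0_eq.
    rewrite R_lin2 by apply ex_chi. rewrite !R_chi_sub by lra.
    pose proof (uu_sum k hk). pose proof (sqp_pos k hk). pose proof (uu_pos k hk).
    right. replace (uu k * ((c + d) / 2 - c) + / uu k * (d - (c + d) / 2)) with ((uu k + / uu k) * ((d - c) / 2)) by (field; lra).
    rewrite H0. field. lra.
  - rewrite R_W_S by auto. rewrite R_own by auto.
    apply Rle_trans with (3 * eps k * om * (d - c) + sumR (k-1) (fun m => 2 * om * Qf c d (S m))).
    + apply Rplus_le_compat_l. apply sumR_le. intros m Hm.
      rewrite child_restrict by (auto; lra). pose proof (child_geom c d m H).
      unfold clamp. rewrite (Rmin_left (cL c d m) d), (Rmin_left (cR c d m) d) by lra.
      rewrite (Rmax_right c (cL c d m)), (Rmax_right c (cR c d m)) by lra.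
      unfold child. rewrite <- child_len. apply IHnu; lra.
    + rewrite sumR_scal, geo_sum, Qf_0, Qf_km1 by lia. right; field.
Qed.


Lemma Scheme k (hk : (2 <= k)%nat) nu om sg c d a b : 0 <= om -> c < d -> a <= b ->
  RInt (wnu k (S nu) om sg c d) a b <= 2 * om * (b - a) +
    sumR (k-1) (fun m => RInt (child k nu om sg c d m) a b - 2 * om * RInt (chi (cL c d m) (cR c d m)) a b).
Proof. intros Hom H Hab. rewrite R_W_S by auto.
  assert (Ech : ex_RInt (chsum k c d) a b) by (unfold chsum; apply exR_sum; intros; apply ex_chi).
  assert (E1 : ex_RInt (fun y => 1 - chsum k c d y) a b) by (apply (exR_minus (fun _ => 1) (chsum k c d)); auto; apply exR_const).
  assert (RInt (ownN k om c d) a b <= RInt (fun y => 2 * om * (1 - chsum k c d y)) a b).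
  { apply R_le; auto. apply ex_own. apply (exR_scal (fun y => 1 - chsum k c d y)); auto.
    intros; apply own_le_ch; auto. }
  rewrite (R_scal (fun y => 1 - chsum k c d y)) in H0 by auto.
  rewrite (R_minus (fun _ => 1) (chsum k c d)) in H0 by (auto; apply exR_const).
  rewrite R_const in H0. unfold chsum in H0.
  rewrite (R_sum (k-1) (fun m => chi (cL c d m) (cR c d m))) in H0 by (intros; apply ex_chi).
  rewrite sumR_minus, sumR_scal. lra. Qed.

Lemma PS k (hk : (2 <= k)%nat) nu : forall om sg c d a' b', 0 <= om -> c < d ->
  c <= a' -> a' <= b' -> b' <= d -> (a' = c \/ b' = d) ->
  RInt (wnu k nu om sg c d) a' b' <= 3 * om * (b' - a').
Proof. induction nu; intros om sg c d a' b' Hom H H1 H2 H3 Hor.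
  - apply Rle_trans with (2 * om * (b' - a')).
    apply R_le_const; auto. apply W_ex; auto. intros; apply W0_le; auto.
    assert (0 <= om * (b' - a')) by (apply Rmult_le_pos; lra). lra.
  - destruct Hor as [Ha|Hb]; [subst a'|subst b'].
    + destruct (Rle_lt_dec b' (c + (d - c) / 3)).
      * apply Rle_trans with (2 * om * (b' - c)).
        apply R_le_const; auto. apply W_ex; auto. intros y Hy. rewrite W_S_fun by auto.
        rewrite sumR_zero. pose proof (own_le k hk om c d y Hom). lra.
        intros m Hm. unfold child. apply W_zero; auto. apply child_geom; auto.
        pose proof (child_geom c d m H). lra.
        assert (0 <= om * (b' - c)) by (apply Rmult_le_pos; lra). lra.
      * apply Rle_trans with (RInt (wnu k (S nu) om sg c d) c d).
        apply R_mono_int; try lra. intros; apply W_ex; auto. intros; apply W_nonneg; auto.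
        apply Rle_trans with (om * (d - c)). apply Tot; auto.
        assert (om * (d - c) <= om * (3 * (b' - c))) by (apply Rmult_le_compat_l; lra). lra.
    + apply Rle_trans with (2 * om * (d - a') + om * (d - a') * chsum k c d a').
      * eapply Rle_trans. apply Scheme; auto. apply Rplus_le_compat_l.
        unfold chsum. rewrite <- sumR_scal. apply sumR_le. intros m Hm.
        set (u := cL c d m). set (v := cR c d m).
        pose proof (child_geom c d m H) as Hg. fold u v in Hg.
        pose proof (child_len c d m) as Hl. pose proof (child_right c d m) as Hr. fold u v in Hl, Hr.
        rewrite child_restrict by (auto; lra). rewrite R_chi by lra. fold u v.
        pose proof (chi_ge0 u v a').
        assert (0 <= om * (d - a') * chi u v a') by (apply Rmult_le_pos; auto; apply Rmult_le_pos; lra).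
        destruct (Rle_lt_dec a' u).
        -- assert (Cu : clamp a' d u = u) by clamp_tac. assert (Cv : clamp a' d v = v) by clamp_tac.
           rewrite Cu, Cv. unfold child. fold u v.
           pose proof (Tot k hk nu (2 * om) (sg / 2) u v ltac:(lra) ltac:(lra)). lra.
        -- destruct (Rle_lt_dec v a').
           ++ assert (Cu : clamp a' d u = a') by clamp_tac. assert (Cv : clamp a' d v = a') by clamp_tac.
              rewrite Cu, Cv, R_point. lra.
           ++ assert (Cu : clamp a' d u = a') by clamp_tac. assert (Cv : clamp a' d v = v) by clamp_tac.
              rewrite Cu, Cv. rewrite chi_in by lra. unfold child. fold u v.
              pose proof (IHnu (2 * om) (sg / 2) u v a' v ltac:(lra) ltac:(lra) ltac:(lra) ltac:(lra) ltac:(lra) (or_intror eq_refl)) as I1.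
              assert (I2 : RInt (wnu k nu (2 * om) (sg / 2) u v) a' v <= 2 * om * (v - u)).
              { eapply Rle_trans. apply (R_mono_int _ u v); try lra. intros; apply W_ex; auto.
                intros; apply W_nonneg; auto; lra. apply Tot; auto; lra. }
              assert (om * (d - v) = om * (v - u)) by (rewrite Hr, Hl; reflexivity).
              destruct (Rle_lt_dec (3 * (v - a')) (v - u)).
              ** assert (om * (3 * (v - a')) <= om * (v - u)) by (apply Rmult_le_compat_l; lra). lra.
              ** assert (om * (v - u) <= om * (3 * (v - a'))) by (apply Rmult_le_compat_l; lra). lra.
      * pose proof (ch_le1 k c d a' H). pose proof (ch_ge0 k c d a').
        assert (om * (d - a') * chsum k c d a' <= om * (d - a') * 1).
        { apply Rmult_le_compat_l; auto. apply Rmult_le_pos; lra. } lra.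
Qed.


Lemma cl1 a b u x : a <= x -> x < b -> u <= x -> u <= clamp a b u <= x.
Proof. intros; clamp_tac. Qed.
Lemma cl2 a b v x : a <= x -> x < b -> x < v -> x < clamp a b v <= v.
Proof. intros; clamp_tac. Qed.
Lemma cl3 a b u v : u <= v -> a <= b -> 0 <= clamp a b v - clamp a b u.
Proof. intros; clamp_tac. Qed.
Lemma cl4 a b u : a <= b -> b <= u -> clamp a b u = b.
Proof. intros; clamp_tac. Qed.
Lemma cl5 a b u x : a <= x -> x < u -> u < b -> clamp a b u = u.
Proof. intros; clamp_tac. Qed.
Lemma cl6 a b u v x : a <= x -> x < u -> u <= v -> u < b -> u <= clamp a b v <= v.
Proof. intros; clamp_tac. Qed.
Lemma cl7 a b u : a <= b -> u <= a -> clamp a b u = a.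
Proof. intros; clamp_tac. Qed.
Lemma cl8 a b v x : v <= x -> x < b -> a < v -> clamp a b v = v.
Proof. intros; clamp_tac. Qed.
Lemma cl9 a b u v x : u <= v -> v <= x -> x < b -> a < v -> u <= clamp a b u <= v.
Proof. intros; clamp_tac. Qed.

Lemma desc_child k c d m r c' d' : (m < k - 1)%nat ->
  descendant k r (cL c d m) (cR c d m) c' d' -> descendant k (S r) c d c' d'.
Proof. intros Hm Hd. simpl. exists m. split. lia.
  rewrite pos_C_l, pos_C_r. exact Hd. Qed.

Lemma Main k (hk : (2 <= k)%nat) nu : forall om sg c d a b x r, 0 <= om -> c < d ->
  c <= a -> a <= x -> x < b -> b <= d -> (r <= nu)%nat ->
  (r = nu \/ forall c' d', descendant k (S r) c d c' d' -> ~ (c' <= x < d')) ->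
  RInt (wnu k nu om sg c d) a b <= 9 * om * 2 ^ r * (b - a).
Proof. induction nu; intros om sg c d a b x r Hom H H1 H2 H3 H4 Hr Hcond.
  - assert (r = 0%nat) by lia. subst r. rewrite pow_O.
    apply Rle_trans with (2 * om * (b - a)).
    apply R_le_const; try lra. apply W_ex; auto. intros; apply W0_le; auto.
    assert (0 <= om * (b - a)) by (apply Rmult_le_pos; lra). lra.
  - assert (Hp : 1 <= 2 ^ r) by (apply pow_R1_Rle; lra).
    set (K := 9 * 2 ^ r - 2).
    assert (HK : 4 <= K) by (unfold K; lra).
    eapply Rle_trans. apply Scheme; auto; lra.
    apply Rle_trans with (2 * om * (b - a) + sumR (k-1) (fun m => K * om * RInt (chi (cL c d m) (cR c d m)) a b)).
    + apply Rplus_le_compat_l. apply sumR_le. intros m Hm.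
      set (u := cL c d m). set (v := cR c d m).
      pose proof (child_geom c d m H) as Hg. fold u v in Hg.
      rewrite child_restrict by (auto; lra). rewrite R_chi by lra. fold u v.
      unfold child. fold u v.
      destruct (classic (u <= x < v)) as [Hx|Hx].
      * assert (Ca : u <= clamp a b u <= x) by (apply cl1; lra).
        assert (Cb : x < clamp a b v <= v) by (apply cl2; lra).
        destruct r as [|r'].
        { exfalso. destruct Hcond as [Hc|Hc]. lia. apply (Hc u v); auto.
          apply (desc_child k c d m 0 u v); auto. simpl; auto. }
        pose proof (IHnu (2 * om) (sg / 2) u v (clamp a b u) (clamp a b v) x r' ltac:(lra) ltac:(lra)
          ltac:(lra) ltac:(lra) ltac:(lra) ltac:(lra) ltac:(lia)) as IH.
        assert (IH' : RInt (wnu k nu (2 * om) (sg / 2) u v) (clamp a b u) (clamp a b v) <=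
           9 * (2 * om) * 2 ^ r' * (clamp a b v - clamp a b u)).
        { apply IH. destruct Hcond as [Hc|Hc]. left; lia. right. intros c' d' Hd.
          apply Hc. apply (desc_child k c d m (S r') c' d'); auto. }
        unfold K. change (2 ^ S r') with (2 * 2 ^ r'). lra.
      * assert (Hl : 0 <= clamp a b v - clamp a b u) by (apply cl3; lra).
        assert (Hom2 : 0 <= om * (clamp a b v - clamp a b u)) by (apply Rmult_le_pos; lra).
        assert (HI : RInt (wnu k nu (2 * om) (sg / 2) u v) (clamp a b u) (clamp a b v) <=
             3 * (2 * om) * (clamp a b v - clamp a b u)).
        { destruct (Rlt_or_le x u) as [Hxu|Hxu].
          - destruct (Rle_lt_dec b u).
            + assert (Cu : clamp a b u = b) by (apply cl4; lra). assert (Cv : clamp a b v = b) by (apply cl4; lra).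
              rewrite Cu, Cv, R_point. lra.
            + assert (Cu : clamp a b u = u) by (apply (cl5 a b u x); lra). assert (Cv : u <= clamp a b v <= v) by (apply (cl6 a b u v x); lra).
              rewrite Cu. apply PS; auto; lra.
          - destruct (Rle_lt_dec v a).
            + assert (Cu : clamp a b u = a) by (apply cl7; lra). assert (Cv : clamp a b v = a) by (apply cl7; lra).
              rewrite Cu, Cv, R_point. lra.
            + assert (Cv : clamp a b v = v) by (apply (cl8 a b v x); lra). assert (Cu : u <= clamp a b u <= v) by (apply (cl9 a b u v x); lra).
              rewrite Cv. apply PS; auto; lra. }
        assert (K * (om * (clamp a b v - clamp a b u)) >= 4 * (om * (clamp a b v - clamp a b u)))
          by (apply Rle_ge, Rmult_le_compat_r; lra).
        lra.
      rewrite sumR_scal.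
      rewrite <- (R_sum (k-1) (fun m => chi (cL c d m) (cR c d m))) by (intros; apply ex_chi).
      assert (RInt (fun y => sumR (k-1) (fun m => chi (cL c d m) (cR c d m) y)) a b <= 1 * (b - a)).
      { apply R_le_const; try lra. apply exR_sum; intros; apply ex_chi. intros; apply ch_le1; auto. }
      assert (0 <= K * om) by (apply Rmult_le_pos; lra).
      assert (K * om * RInt (fun y => sumR (k-1) (fun m => chi (cL c d m) (cR c d m) y)) a b <= K * om * (1 * (b - a)))
        by (apply Rmult_le_compat_l; auto).
      unfold K in *. lra.
Qed.

Lemma frac_in (y : R) (j : Z) : IZR j <= y < IZR j + 1 -> frac_part y = y - IZR j.
Proof. intros H. unfold frac_part, Int_part.
  assert (up y = (j + 1)%Z). { symmetry; apply tech_up; rewrite plus_IZR; simpl; lra. }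
  rewrite H0. replace (j + 1 - 1)%Z with j by lia. reflexivity. Qed.

Definition W0 k := wnu k (nn k) 1 (pp k) 0 1.
Definition Fw k := fun t => Rabs (w k t).

Lemma R_shift (f : R -> R) s a b : (forall s t, ex_RInt f s t) ->
  RInt (fun y => f (y - s)) a b = RInt f (a - s) (b - s).
Proof. intros Hex. pose proof (RInt_comp_lin f 1 (-s) a b (Hex _ _)) as H.
  replace (1 * a + - s) with (a - s) in H by ring. replace (1 * b + - s) with (b - s) in H by ring.
  rewrite <- H. apply R_ext_all. intros y. change (scal 1 (f (1 * y + - s))) with (1 * f (1 * y + - s)). replace (1 * y + - s) with (y - s) by ring. symmetry; apply Rmult_1_l. Qed.
Lemma ex_shift (f : R -> R) s a b : (forall s t, ex_RInt f s t) -> ex_RInt (fun y => f (y - s)) a b.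
Proof. intros Hex. pose proof (ex_RInt_comp_lin f 1 (-s) a b (Hex _ _)) as H.
  eapply exR_ext_all. 2: exact H. intros y. change (scal 1 (f (1 * y + - s))) with (1 * f (1 * y + - s)). transitivity (f (1 * y + - s)). apply Rmult_1_l. f_equal; ring. Qed.

Lemma Period k (hk : (2 <= k)%nat) (j : Z) a' b' : IZR j <= a' -> a' <= b' -> b' <= IZR j + 1 ->
  ex_RInt (Fw k) a' b' /\ RInt (Fw k) a' b' = RInt (W0 k) (a' - IZR j) (b' - IZR j).
Proof. intros H1 H2 H3.
  assert (Heq : forall y, a' < y < b' -> (fun y => W0 k (y - IZR j)) y = Fw k y).
  { intros y Hy. unfold Fw, w. rewrite (frac_in y j) by lra. unfold W0.
    rewrite Rabs_right. reflexivity. apply Rle_ge, W_nonneg; auto; lra. }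
  assert (Hex : forall s t, ex_RInt (W0 k) s t) by (intros; apply W_ex; auto).
  split.
  - eapply exR_ext; eauto. apply ex_shift; auto.
  - rewrite <- (R_ext (fun y => W0 k (y - IZR j))) by auto. apply R_shift; auto. Qed.

Lemma TopPS k (hk : (2 <= k)%nat) (j : Z) a' b' : IZR j <= a' -> a' <= b' -> b' <= IZR j + 1 ->
  (a' = IZR j \/ b' = IZR j + 1) -> RInt (Fw k) a' b' <= 3 * (b' - a').
Proof. intros H1 H2 H3 H4. destruct (Period k hk j a' b' H1 H2 H3) as [_ ->].
  unfold W0. replace (3 * (b' - a')) with (3 * 1 * ((b' - IZR j) - (a' - IZR j))) by ring.
  apply PS; auto; lra. Qed.

Lemma LeftPart k (hk : (2 <= k)%nat) N : forall a (j : Z), IZR j - INR N <= a -> a <= IZR j ->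
  ex_RInt (Fw k) a (IZR j) /\ RInt (Fw k) a (IZR j) <= 3 * (IZR j - a).
Proof. induction N; intros a j H1 H2.
  - simpl in H1. assert (a = IZR j) by lra. subst a.
    destruct (Period k hk j (IZR j) (IZR j)) as [He _]; try lra. split; auto. rewrite R_point; lra.
  - destruct (Rle_lt_dec (IZR j - 1) a).
    + assert (Hj : IZR (j - 1) = IZR j - 1) by (rewrite minus_IZR; auto).
      destruct (Period k hk (j - 1) a (IZR j)) as [He _]; try lra. split; auto.
      apply (TopPS k hk (j - 1)); lra.
    + rewrite S_INR in H1. assert (Hj : IZR (j - 1) = IZR j - 1) by (rewrite minus_IZR; auto).
      destruct (IHN a (j - 1)%Z) as [He1 Hb1]; try lra.
      destruct (Period k hk (j - 1) (IZR (j-1)) (IZR j)) as [He2 _]; try lra.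
      pose proof (TopPS k hk (j - 1) (IZR (j-1)) (IZR j)) as Hb2.
      split. eapply ex_RInt_Chasles; eauto.
      rewrite <- (R_chasles _ a (IZR (j-1)) (IZR j)) by auto.
      assert (RInt (Fw k) (IZR (j - 1)) (IZR j) <= 3 * (IZR j - IZR (j - 1))) by (apply Hb2; lra).
      lra. Qed.

Lemma RightPart k (hk : (2 <= k)%nat) N : forall b (j : Z), b <= IZR j + INR N -> IZR j <= b ->
  ex_RInt (Fw k) (IZR j) b /\ RInt (Fw k) (IZR j) b <= 3 * (b - IZR j).
Proof. induction N; intros b j H1 H2.
  - simpl in H1. assert (b = IZR j) by lra. subst b.
    destruct (Period k hk j (IZR j) (IZR j)) as [He _]; try lra. split; auto. rewrite R_point; lra.
  - destruct (Rle_lt_dec b (IZR j + 1)).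
    + destruct (Period k hk j (IZR j) b) as [He _]; try lra. split; auto.
      apply (TopPS k hk j); lra.
    + rewrite S_INR in H1. assert (Hj : IZR (j + 1) = IZR j + 1) by (rewrite plus_IZR; auto).
      destruct (IHN b (j + 1)%Z) as [He1 Hb1]; try lra.
      destruct (Period k hk j (IZR j) (IZR (j+1))) as [He2 _]; try lra.
      pose proof (TopPS k hk j (IZR j) (IZR (j+1))) as Hb2.
      split. eapply ex_RInt_Chasles; eauto.
      rewrite <- (R_chasles _ (IZR j) (IZR (j+1)) b) by auto.
      assert (RInt (Fw k) (IZR j) (IZR (j + 1)) <= 3 * (IZR (j+1) - IZR j)) by (apply Hb2; lra).
      lra. Qed.

Lemma desc_shift k dd : forall a b c' d' s, descendant k dd a b c' d' ->
  descendant k dd (a + s) (b + s) (c' + s) (d' + s).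
Proof. induction dd; intros a b c' d' s H.
  - simpl in *. destruct H; subst; auto.
  - simpl in *. destruct H as [m [Hm Hd]]. exists m. split; auto.
    replace (third_l 2 (Im_left m (a + s) (b + s)) (b + s)) with (third_l 2 (Im_left m a b) b + s)
      by (unfold third_l, Im_left; field; apply pow_nonzero; lra).
    replace (third_r 2 (Im_left m (a + s) (b + s)) (b + s)) with (third_r 2 (Im_left m a b) b + s)
      by (unfold third_r, Im_left; field; apply pow_nonzero; lra).
    apply IHdd; auto. Qed.

Lemma min_exists (P : nat -> Prop) N : forall n, (n <= N)%nat -> P n ->
  exists m, (m <= n)%nat /\ P m /\ forall i, (i < m)%nat -> ~ P i.
Proof. induction N; intros n Hn HP.
  - exists n; split; auto. split; auto. intros; lia.
  - destruct (classic (exists i, (i < n)%nat /\ P i)) as [[i [Hi HPi]]|Hno].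
    + destruct (IHN i ltac:(lia) HPi) as [m [Hm [HPm Hmin]]]. exists m. split. lia. auto.
    + exists n. split; auto. split; auto. intros i Hi HPi. apply Hno; eauto. Qed.

Lemma exR_ch1 (f : R -> R) a b c : a <= b <= c -> ex_RInt f a c -> ex_RInt f a b.
Proof. intros; exact (ex_RInt_Chasles_1 (V := R_CompleteNormedModule) f a b c H H0). Qed.
Lemma exR_ch2 (f : R -> R) a b c : a <= b <= c -> ex_RInt f a c -> ex_RInt f b c.
Proof. intros; exact (ex_RInt_Chasles_2 (V := R_CompleteNormedModule) f a b c H H0). Qed.

Theorem proposition3 (k : nat) (hk : (2 <= k)%nat) (x : R) :
  forall (a b : R), a <= x < b ->
  forall pr : Riemann_integrable (fun t => Rabs (w k t)) a b,
    RiemannInt pr / (b - a) <= 9 / 2 * wtilde k x.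
Proof.
  intros a b [Hax Hxb] pr.
  set (j := Int_part x). destruct (base_Int_part x) as [Hj1 Hj2]. fold j in Hj1, Hj2.
  assert (Hn : in_supp k (nn k) x).
  { exists (IZR j), (IZR j + 1). split. split. lia. exists j. rewrite Nat.sub_diag. simpl. split; reflexivity. lra. }
  destruct (min_exists (fun nu => in_supp k nu x) (nn k) (nn k) (le_n _) Hn) as [ns [Hns [HPns Hmin]]].
  set (r := (nn k - ns)%nat).
  assert (Hint : RInt (Fw k) a b <= 9 * 2 ^ r * (b - a)).
  { pose proof (ex_RInt_Reals_1 _ _ _ pr) as Hex. change (ex_RInt (Fw k) a b) in Hex.
    set (a0 := Rmax a (IZR j)). set (b0 := Rmin b (IZR j + 1)).
    assert (Ha0 : a <= a0 /\ IZR j <= a0 /\ a0 <= x) by (unfold a0, Rmax; destruct Rle_dec; lra).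
    assert (Hb0 : b0 <= b /\ b0 <= IZR j + 1 /\ x < b0) by (unfold b0, Rmin; destruct Rle_dec; lra).
    assert (E1 : ex_RInt (Fw k) a a0) by (apply (exR_ch1 _ a a0 b); auto; lra).
    assert (E23 : ex_RInt (Fw k) a0 b) by (apply (exR_ch2 _ a a0 b); auto; lra).
    assert (E2 : ex_RInt (Fw k) a0 b0) by (apply (exR_ch1 _ a0 b0 b); auto; lra).
    assert (E3 : ex_RInt (Fw k) b0 b) by (apply (exR_ch2 _ a0 b0 b); auto; lra).
    rewrite <- (R_chasles _ a a0 b) by auto. rewrite <- (R_chasles _ a0 b0 b) by auto.
    assert (B1 : RInt (Fw k) a a0 <= 3 * (a0 - a)).
    { destruct (Rle_lt_dec (IZR j) a).
      - assert (a0 = a) by (unfold a0, Rmax; destruct Rle_dec; lra). rewrite H, R_point. lra.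
      - assert (a0 = IZR j) by (unfold a0, Rmax; destruct Rle_dec; lra). rewrite H.
        destruct (INR_unbounded (IZR j - a)) as [N HN].
        apply (LeftPart k hk N a j); lra. }
    assert (B3 : RInt (Fw k) b0 b <= 3 * (b - b0)).
    { destruct (Rle_lt_dec b (IZR j + 1)).
      - assert (b0 = b) by (unfold b0, Rmin; destruct Rle_dec; lra). rewrite H, R_point. lra.
      - assert (b0 = IZR (j + 1)) by (rewrite plus_IZR; unfold b0, Rmin; destruct Rle_dec; simpl; lra). rewrite H.
        destruct (INR_unbounded (b - IZR (j + 1))) as [N HN].
        apply (RightPart k hk N b (j + 1)%Z); rewrite ?plus_IZR in *; simpl in *; lra. }
    assert (B2 : RInt (Fw k) a0 b0 <= 9 * 1 * 2 ^ r * ((b0 - IZR j) - (a0 - IZR j))).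
    { destruct (Period k hk j a0 b0) as [_ Heq]; try lra. rewrite Heq. unfold W0.
      apply (Main k hk (nn k) 1 (pp k) 0 1 (a0 - IZR j) (b0 - IZR j) (x - IZR j) r); try lra.
      unfold r; lia.
      destruct ns as [|mu].
      - left. unfold r; lia.
      - right. intros c' d' Hd Hc. apply (Hmin mu ltac:(lia)).
        exists (c' + IZR j), (d' + IZR j). split; [|lra]. split. lia. exists j.
        replace (nn k - mu)%nat with (S r) by (unfold r; lia).
        pose proof (desc_shift k (S r) 0 1 c' d' (IZR j) Hd) as Hs.
        rewrite Rplus_0_l, (Rplus_comm 1) in Hs. exact Hs. }
    assert (Hp : 1 <= 2 ^ r) by (apply pow_R1_Rle; lra).
    assert (3 * (a0 - a) <= 9 * 2 ^ r * (a0 - a)) by (apply Rmult_le_compat_r; lra).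
    assert (3 * (b - b0) <= 9 * 2 ^ r * (b - b0)) by (apply Rmult_le_compat_r; lra).
    lra. }
  assert (Hwt : 2 ^ (S r) <= wtilde k x).
  { unfold wtilde.
    assert (Hnn : forall i, (i < nn k)%nat -> 0 <= (fun l' => let l := S l' in
        2 ^ l * ind (in_supp k (nn k - (l - 1)) x /\ ~ in_supp k (nn k - l) x)) i).
    { intros i _. cbv beta zeta. apply Rmult_le_pos. apply pow_le; lra. apply ind_ge0. }
    assert (0 <= 2 ^ S (nn k) * ind (in_supp k 0 x)) by (apply Rmult_le_pos; [apply pow_le; lra| apply ind_ge0]).
    destruct ns as [|mu].
    - assert (r = nn k) by (unfold r; lia). rewrite H0. rewrite (ind_1 (in_supp k 0 x)) by auto.
      pose proof (sumR_ge0 _ _ Hnn). lra.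
    - pose proof (sumR_ge_term _ _ r Hnn ltac:(unfold r; lia)) as Ht.
      cbv beta zeta in Ht. rewrite ind_1 in Ht. lra.
      split. replace (nn k - (S r - 1))%nat with (S mu) by (unfold r; lia). auto.
      replace (nn k - S r)%nat with mu by (unfold r; lia). apply Hmin; lia. }
  rewrite <- (RInt_Reals _ _ _ pr). change (RInt (Fw k) a b / (b - a) <= 9 / 2 * wtilde k x).
  apply Rle_div_l. lra.
  assert (9 / 2 * 2 ^ S r * (b - a) <= 9 / 2 * wtilde k x * (b - a)).
  { apply Rmult_le_compat_r. lra. apply Rmult_le_compat_l; lra. }
  change (2 ^ S r) with (2 * 2 ^ r) in H. lra.
Qed.
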